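(* Let $\mathcal{F}(X)\subseteq\Psi$, with $\Psi$ carrying an admissible hyperspace topology $\Delta$. (i) If $(X,\mathbb{F})$ is weakly mixing of all orders, then $(\Psi,\overline{\mathbb{F}})$ is weakly mixing. (ii) If moreover $\mathbb{F}$ is commutative and there is a base $\beta$ for the topology of $X$ with $U^+=\{A\in\Psi:A\subseteq U\}\in\Delta$ for every $U\in\beta$, then $(\Psi,\overline{\mathbb{F}})$ weakly mixing implies $(X,\mathbb{F})$ weakly mixing of all orders.
   Context: $(X,d)$ compact metric, $\mathbb{F}=(f_n)$ continuous self-maps, $\omega_n=f_n\circ\cdots\circ f_1$; $\mathbb{F}$ is commutative if $f_n\circ f_m=f_m\circ f_n$ for all $n,m$. The system is weakly mixing of order $k$ if for any non-empty open $U_1,\dots,U_k,V_1,\dots,V_k$ there is $n$ with $\omega_n(U_i)\cap V_i\neq\emptyset$ for all $i$; weakly mixing means of order 2. $\mathcal{F}(X)$ denotes non-empty finite subsets; $\Psi\subseteq\mathcal{K}(X)$ is invariant under all $\omega_k$, and the induced system acts by $\overline{\omega}_k(A)=\omega_k(A)$, with mixing notions defined analogously on $(\Psi,\Delta)$. An admissible topology ($x\mapsto\{x\}$ continuous) is of hit-and-miss or hit-and-far-miss type: generated by $U^-=\{A:A\cap U\neq\emptyset\}$ ($U$ open) and sets $(E^c)^+=\{A:A\subseteq E^c\}$ (resp. $(E^c)^{++}=\{A:\exists\varepsilon>0, S_\varepsilon(A)\subseteq E^c\}$) for $E$ in a fixed family of closed sets; induced maps are assumed continuous. *)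

(* Defs.v *)
From Stdlib Require Import Reals List.
Open Scope R_scope.

Definition set (T : Type) := T -> Prop.

Section Defs.
Context {X : Type} (d : X -> X -> R).

Definition is_metric : Prop :=
  (forall x y, 0 <= d x y) /\
  (forall x y, d x y = 0 <-> x = y) /\
  (forall x y, d x y = d y x) /\
  (forall x y z, d x z <= d x y + d y z).

Definition is_open (U : set X) : Prop :=
  forall x, U x -> exists r, 0 < r /\ forall y, d x y < r -> U y.

Definition is_closed (E : set X) : Prop := is_open (fun x => ~ E x).

Definition compact_set (K : set X) : Prop :=
  forall C : set (set X),
    (forall U, C U -> is_open U) ->
    (forall x, K x -> exists U, C U /\ U x) ->
    exists l : list (set X),
      (forall U, In U l -> C U) /\ (forall x, K x -> exists U, In U l /\ U x).

Definition compact_space : Prop := compact_set (fun _ => True).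

Definition continuous (g : X -> X) : Prop :=
  forall U, is_open U -> is_open (fun x => U (g x)).

Definition is_base (beta : set (set X)) : Prop :=
  (forall B, beta B -> is_open B) /\
  (forall U x, is_open U -> U x -> exists B, beta B /\ B x /\ forall y, B y -> U y).

Definition nbhd (A : set X) (eps : R) : set X :=
  fun x => exists a, A a /\ d x a < eps.

End Defs.

Definition img {X : Type} (g : X -> X) (A : set X) : set X :=
  fun y => exists x, A x /\ y = g x.

Definition singleton {X : Type} (x : X) : set X := fun y => y = x.

Definition nonempty {T : Type} (A : set T) : Prop := exists a, A a.

Definition finite_nonempty {X : Type} (A : set X) : Prop :=
  exists l : list X, l <> nil /\ forall y, A y <-> In y l.

(* The sequence F = (f_1, f_2, ...) is represented by f : nat -> X -> X
   with f i = f_{i+1}.  omega f n = f_n o ... o f_1 (omega f 0 = id). *)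
Fixpoint omega {X : Type} (f : nat -> X -> X) (n : nat) (x : X) : X :=
  match n with
  | O => x
  | S m => f m (omega f m x)
  end.

Definition commutative {X : Type} (f : nat -> X -> X) : Prop :=
  forall n m x, f n (f m x) = f m (f n x).

Definition wm_order {T : Type} (isopen : set T -> Prop) (phi : nat -> T -> T)
    (k : nat) : Prop :=
  forall U V : nat -> set T,
    (forall i, (i < k)%nat ->
       isopen (U i) /\ isopen (V i) /\ nonempty (U i) /\ nonempty (V i)) ->
    exists n, (1 <= n)%nat /\
      forall i, (i < k)%nat -> exists a, U i a /\ V i (phi n a).

Definition weakly_mixing {T : Type} (isopen : set T -> Prop) (phi : nat -> T -> T) : Prop :=
  wm_order isopen phi 2.

Definition wm_all_orders {T : Type} (isopen : set T -> Prop) (phi : nat -> T -> T) : Prop :=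
  forall k, wm_order isopen phi k.

Definition induced {X : Type} (f : nat -> X -> X) (n : nat) (A : set X) : set X :=
  img (omega f n) A.

Definition hit {X : Type} (Psi : set (set X)) (U : set X) : set (set X) :=
  fun A => Psi A /\ exists x, A x /\ U x.

Definition miss {X : Type} (Psi : set (set X)) (E : set X) : set (set X) :=
  fun A => Psi A /\ forall x, A x -> ~ E x.

Definition farmiss {X : Type} (d : X -> X -> R) (Psi : set (set X)) (E : set X)
  : set (set X) :=
  fun A => Psi A /\ exists eps, 0 < eps /\ forall x, nbhd d A eps x -> ~ E x.

Definition upper {X : Type} (Psi : set (set X)) (U : set X) : set (set X) :=
  fun A => Psi A /\ forall x, A x -> U x.

(* Delta is the topology on Psi generated by the subbase [Sub]:
   open sets are exactly the subsets W of Psi such that each point of W lies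
   in a finite intersection of subbasic sets (within Psi) contained in W. *)
Definition generated_by {X : Type} (Psi : set (set X))
    (Sub : set (set (set X))) (Delta : set (set (set X))) : Prop :=
  forall W,
    Delta W <->
    ((forall A, W A -> Psi A) /\
     forall A, W A ->
       exists l : list (set (set X)),
         (forall S, In S l -> Sub S) /\ (forall S, In S l -> S A) /\
         (forall B, Psi B -> (forall S, In S l -> S B) -> W B)).

Definition same_set {T : Type} (S S' : set T) : Prop := forall a, S a <-> S' a.

Definition hm_subbase {X : Type} (d : X -> X -> R) (Psi : set (set X))
    (Efam : set (set X)) : set (set (set X)) :=
  fun S => (exists U, is_open d U /\ same_set S (hit Psi U)) \/
           (exists E, Efam E /\ same_set S (miss Psi E)).

Definition hfm_subbase {X : Type} (d : X -> X -> R) (Psi : set (set X))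
    (Efam : set (set X)) : set (set (set X)) :=
  fun S => (exists U, is_open d U /\ same_set S (hit Psi U)) \/
           (exists E, Efam E /\ same_set S (farmiss d Psi E)).

Definition hit_miss_type {X : Type} (d : X -> X -> R) (Psi : set (set X))
    (Delta : set (set (set X))) : Prop :=
  exists Efam : set (set X),
    (forall E, Efam E -> is_closed d E) /\
    (generated_by Psi (hm_subbase d Psi Efam) Delta \/
     generated_by Psi (hfm_subbase d Psi Efam) Delta).

Definition admissible {X : Type} (d : X -> X -> R) (Psi : set (set X))
    (Delta : set (set (set X))) : Prop :=
  forall W, Delta W -> is_open d (fun x => W (singleton x)).

Definition induced_continuous {X : Type} (f : nat -> X -> X) (Psi : set (set X))
    (Delta : set (set (set X))) : Prop :=
  forall n W, Delta W -> Delta (fun A => Psi A /\ W (induced f n A)).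

(* Main.v *)
Require Import Defs.
From Stdlib Require Import Reals List.
From Stdlib Require Import Lra Lia.

Section Aux.
Context {X : Type} (d : X -> X -> R).

Lemma open_inter (U V : set X) : is_open d U -> is_open d V ->
  is_open d (fun x => U x /\ V x).
Proof.
  intros HU HV x [Ux Vx].
  destruct (HU x Ux) as [r1 [Hr1 H1]]. destruct (HV x Vx) as [r2 [Hr2 H2]].
  exists (Rmin r1 r2). split. { apply Rmin_pos; auto. }
  intros y Hy. split.
  - apply H1. pose proof (Rmin_l r1 r2). lra.
  - apply H2. pose proof (Rmin_r r1 r2). lra.
Qed.

Lemma open_true : is_open d (fun _ => True).
Proof. intros x _. exists 1. split; [lra|auto]. Qed.

Lemma nbhd_open (Hd : is_metric d) (A : set X) eps : is_open d (nbhd d A eps).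
Proof.
  destruct Hd as [H0 [H1 [Hs Ht]]].
  intros x [a [Aa Hxa]]. exists (eps - d x a). split; [lra|].
  intros y Hy. exists a. split; auto.
  pose proof (Ht y x a). rewrite (Hs y x) in H. lra.
Qed.

Lemma omega_cont (f : nat -> X -> X) (Hf : forall n, continuous d (f n)) n :
  continuous d (omega f n).
Proof.
  induction n; intros U HU; simpl.
  - exact HU.
  - apply (IHn (fun y => U (f n y))). apply Hf. exact HU.
Qed.

Lemma omega_comm1 (f : nat -> X -> X) (Hc : commutative f) k m x :
  f k (omega f m x) = omega f m (f k x).
Proof.
  induction m; simpl; auto. rewrite Hc. rewrite IHm. reflexivity.
Qed.

Lemma omega_comm (f : nat -> X -> X) (Hc : commutative f) n m x :
  omega f n (omega f m x) = omega f m (omega f n x).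
Proof.
  induction n; simpl; auto. rewrite IHn. apply omega_comm1; auto.
Qed.

Lemma pick_list {A : Type} (P : A -> X -> Prop) (L : list A) :
  (forall p, In p L -> exists a, P p a) ->
  exists la, (forall p, In p L -> exists a, In a la /\ P p a) /\
             (forall a, In a la -> exists p, In p L /\ P p a).
Proof.
  induction L as [|q L IH]; intros H.
  - exists nil. split; intros; simpl in *; tauto.
  - destruct IH as [la [H1 H2]]. { intros p Hp. apply H. simpl; auto. }
    destruct (H q (or_introl eq_refl)) as [b Hb].
    exists (b :: la). split.
    + intros p [<-|Hp]. * exists b; simpl; auto.
      * destruct (H1 p Hp) as [a [Ha Pa]]. exists a; simpl; auto.
    + intros a [<-|Ha]. * exists q; simpl; auto.
      * destruct (H2 a Ha) as [p [Hp Pp]]. exists p; simpl; auto.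
Qed.

End Aux.

Lemma basic_gen {X : Type} (d : X -> X -> R) (Psi : set (set X))
  (Sub : set (set (set X))) (A : set X)
  (HS : forall S, Sub S -> S A ->
     (exists U, is_open d U /\ (exists x, A x /\ U x) /\
        forall B, Psi B -> (exists x, B x /\ U x) -> S B) \/
     (exists G, is_open d G /\ (forall x, A x -> G x) /\
        forall B, Psi B -> (forall x, B x -> G x) -> S B)) :
  forall l, (forall S, In S l -> Sub S) -> (forall S, In S l -> S A) ->
  exists G Ls, is_open d G /\ (forall x, A x -> G x) /\
    (forall U, In U Ls -> is_open d U /\ exists x, A x /\ U x) /\
    (forall B, Psi B -> (forall x, B x -> G x) ->
       (forall U, In U Ls -> exists x, B x /\ U x) -> forall S, In S l -> S B).
Proof.
  induction l as [|S l IH]; intros H1 H2.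
  - exists (fun _ => True), nil. split; [|split; [|split]].
    + apply open_true.
    + auto.
    + intros U [].
    + intros B _ _ _ S0 [].
  - destruct IH as [G [Ls [HG [HAG [HLs HB]]]]].
    { intros; apply H1; simpl; auto. } { intros; apply H2; simpl; auto. }
    destruct (HS S (H1 S (or_introl eq_refl)) (H2 S (or_introl eq_refl)))
      as [[U [HU [HAU HUB]]] | [G' [HG' [HAG' HGB]]]].
    + exists G, (U :: Ls). split; [|split; [|split]]; auto.
      * intros U'' [<-|HU'']; auto.
      * intros B PB BG BL S' [<-|HS'].
        -- apply HUB; auto. apply BL; simpl; auto.
        -- apply HB; auto. intros; apply BL; simpl; auto.
    + exists (fun x => G x /\ G' x), Ls. split; [|split; [|split]]; auto.
      * apply open_inter; auto.
      * intros B PB BG BL S' [<-|HS'].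
        -- apply HGB; auto. intros x Bx; apply BG; auto.
        -- apply HB; auto. intros x Bx; apply BG; auto.
Qed.

Lemma basic {X : Type} (d : X -> X -> R) (Psi : set (set X))
  (Delta : set (set (set X))) (Hd : is_metric d)
  (HType : hit_miss_type d Psi Delta) W A :
  Delta W -> W A ->
  exists G Ls, is_open d G /\ (forall x, A x -> G x) /\
    (forall U, In U Ls -> is_open d U /\ exists x, A x /\ U x) /\
    (forall B, Psi B -> (forall x, B x -> G x) ->
       (forall U, In U Ls -> exists x, B x /\ U x) -> W B).
Proof.
  intros HW HA.
  destruct HType as [Efam [HE [Hg|Hg]]];
  destruct (proj1 (Hg W) HW) as [_ HW2];
  destruct (HW2 A HA) as [l [Hl1 [Hl2 Hl3]]].
  - destruct (basic_gen d Psi (hm_subbase d Psi Efam) A) with (l := l)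
      as [G [Ls [HG [HAG [HLs HB]]]]]; auto.
    + intros S [[U [HU HS]]|[E [HEf HS]]] SA.
      * left. exists U. repeat split; auto.
        -- apply HS in SA. destruct SA as [_ SA]; auto.
        -- intros B PB BU. apply HS. split; auto.
      * right. exists (fun x => ~ E x). repeat split.
        -- apply HE; auto.
        -- apply HS in SA. destruct SA as [_ SA]; auto.
        -- intros B PB BG. apply HS. split; auto.
    + exists G, Ls. split; [|split; [|split]]; auto. intros B PB BG BL.
      apply Hl3; auto. apply HB; auto.
  - destruct (basic_gen d Psi (hfm_subbase d Psi Efam) A) with (l := l)
      as [G [Ls [HG [HAG [HLs HB]]]]]; auto.
    + intros S [[U [HU HS]]|[E [HEf HS]]] SA.
      * left. exists U. repeat split; auto.
        -- apply HS in SA. destruct SA as [_ SA]; auto.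
        -- intros B PB BU. apply HS. split; auto.
      * right. apply HS in SA. destruct SA as [_ [eps [Heps Hne]]].
        destruct Hd as [H0 [H1 [Hs Ht]]].
        exists (nbhd d A (eps / 2)). repeat split.
        -- apply nbhd_open. repeat split; auto; apply H1; auto.
        -- intros x Ax. exists x. split; auto.
           assert (d x x = 0) by (apply H1; auto). lra.
        -- intros B PB BG. apply HS. split; auto. exists (eps / 2).
           split; [lra|]. intros x [b [Bb Hxb]].
           destruct (BG b Bb) as [a [Aa Hba]]. apply Hne.
           exists a. split; auto. pose proof (Ht x b a). lra.
    + exists G, Ls. split; [|split; [|split]]; auto. intros B PB BG BL.
      apply Hl3; auto. apply HB; auto.
Qed.

Section Main.
Context (X : Type) (d : X -> X -> R) (f : nat -> X -> X)
    (Psi : set (set X)) (Delta : set (set (set X)))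
    (Hd : is_metric d)
    (Hf : forall n, continuous d (f n))
    (HPsiK : forall A, Psi A -> nonempty A /\ compact_set d A)
    (HFin : forall A, finite_nonempty A -> Psi A)
    (HInv : forall n A, Psi A -> Psi (induced f n A))
    (HType : hit_miss_type d Psi Delta).

Definition goodpair (p : set X * set X) : Prop :=
  is_open d (fst p) /\ is_open d (snd p) /\ nonempty (fst p) /\ nonempty (snd p).

Lemma wm_list : wm_all_orders (is_open d) (omega f) ->
  forall L, (forall p, In p L -> goodpair p) ->
  exists n, (1 <= n)%nat /\ forall p, In p L -> exists a, fst p a /\ snd p (omega f n a).
Proof.
  intros Hwm L HL.
  set (dflt := ((fun _ : X => True), (fun _ : X => True))).
  destruct (Hwm (length L) (fun i => fst (nth i L dflt)) (fun i => snd (nth i L dflt)))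
    as [n [Hn Hall]].
  - intros i Hi. apply HL. apply nth_In; auto.
  - exists n. split; auto. intros p Hp.
    destruct (In_nth L p dflt Hp) as [i [Hi Hnth]].
    destruct (Hall i Hi) as [a Ha]. rewrite Hnth in Ha. exists a; auto.
Qed.

Lemma pair_lemma W V A A' : Delta W -> Delta V -> W A -> V A' ->
  exists L, (forall p, In p L -> goodpair p) /\ L <> nil /\
   forall n (la : list X),
   (forall p, In p L -> exists a, In a la /\ fst p a /\ snd p (omega f n a)) ->
   (forall a, In a la -> exists p, In p L /\ fst p a /\ snd p (omega f n a)) ->
   W (fun y => In y la) /\ V (induced f n (fun y => In y la)).
Proof.
  intros DW DV WA VA'.
  destruct (basic d Psi Delta Hd HType W A DW WA) as [G [Ls [HG [HAG [HLs HB]]]]].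
  destruct (basic d Psi Delta Hd HType V A' DV VA') as [G' [Ls' [HG' [HAG' [HLs' HB']]]]].
  destruct (HPsiK A) as [[a0 Aa0] _].
  { destruct HType as [Efam [_ [Hg|Hg]]]; apply (proj1 (Hg W) DW); auto. }
  destruct (HPsiK A') as [[a1 Aa1] _].
  { destruct HType as [Efam [_ [Hg|Hg]]]; apply (proj1 (Hg V) DV); auto. }
  set (L := (G, G') :: map (fun U => ((fun x => U x /\ G x), G')) Ls ++
                       map (fun U' => (G, (fun x => U' x /\ G' x))) Ls').
  assert (HLsub : forall p, In p L -> (forall x, fst p x -> G x) /\ (forall x, snd p x -> G' x)).
  { intros p [<-|Hp]; simpl; [split; auto|].
    apply in_app_or in Hp. destruct Hp as [Hp|Hp]; apply in_map_iff in Hp;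
    destruct Hp as [U [<- _]]; simpl; split; intros x Hx; tauto. }
  exists L. split; [|split].
  - intros p [<-|Hp].
    + repeat split; simpl; auto. exists a0; auto. exists a1; auto.
    + apply in_app_or in Hp. destruct Hp as [Hp|Hp]; apply in_map_iff in Hp;
      destruct Hp as [U [<- HU]].
      * destruct (HLs U HU) as [HoU [x [Ax Ux]]].
        repeat split; simpl; auto. apply open_inter; auto. exists x; auto. exists a1; auto.
      * destruct (HLs' U HU) as [HoU [x [Ax Ux]]].
        repeat split; simpl; auto. apply open_inter; auto. exists a0; auto. exists x; auto.
  - discriminate.
  - intros n la H1 H2.
    assert (Pla : Psi (fun y => In y la)).
    { apply HFin. exists la. split; [|tauto].
      destruct (H1 (G, G') (or_introl eq_refl)) as [a [Ha _]].
      destruct la; [destruct Ha|discriminate]. }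
    split.
    + apply HB; auto.
      * intros x Hx. destruct (H2 x Hx) as [p [Hp [Hf1 _]]]. apply (HLsub p Hp); auto.
      * intros U HU.
        destruct (H1 ((fun x => U x /\ G x), G')) as [a [Ha [[Ua _] _]]].
        { right. apply in_or_app. left. apply in_map_iff. exists U; auto. }
        exists a; auto.
    + apply HB'; auto.
      * intros y [x [Hx ->]]. destruct (H2 x Hx) as [p [Hp [_ Hs]]]. apply (HLsub p Hp); auto.
      * intros U HU.
        destruct (H1 (G, (fun x => U x /\ G' x))) as [a [Ha [_ [Ua _]]]].
        { right. apply in_or_app. right. apply in_map_iff. exists U; auto. }
        exists (omega f n a). split; auto. exists a; auto.
Qed.

Lemma part1 : wm_all_orders (is_open d) (omega f) -> weakly_mixing Delta (induced f).
Proof.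
  intros Hwm U V HUV.
  destruct (HUV 0%nat ltac:(lia)) as [DU0 [DV0 [[A0 HA0] [A0' HA0']]]].
  destruct (HUV 1%nat ltac:(lia)) as [DU1 [DV1 [[A1 HA1] [A1' HA1']]]].
  destruct (pair_lemma _ _ _ _ DU0 DV0 HA0 HA0') as [L0 [G0 [_ P0]]].
  destruct (pair_lemma _ _ _ _ DU1 DV1 HA1 HA1') as [L1 [G1 [_ P1]]].
  destruct (wm_list Hwm (L0 ++ L1)) as [n [Hn Hall]].
  { intros p Hp. apply in_app_or in Hp. destruct Hp; auto. }
  destruct (pick_list d (fun (p : set X * set X) (a : X) => fst p a /\ snd p (omega f n a)) L0) as [la0 [Q0 R0]].
  { intros p Hp. apply Hall. apply in_or_app; auto. }
  destruct (pick_list d (fun (p : set X * set X) (a : X) => fst p a /\ snd p (omega f n a)) L1) as [la1 [Q1 R1]].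
  { intros p Hp. apply Hall. apply in_or_app; auto. }
  exists n. split; auto. intros i Hi.
  destruct i as [|[|i]]; [| |lia].
  - exists (fun y => In y la0). apply P0; auto.
  - exists (fun y => In y la1). apply P1; auto.
Qed.

Definition NN (U V : set X) (n : nat) : Prop := exists x, U x /\ V (omega f n x).

Definition gp (U V : set X) : Prop :=
  is_open d U /\ is_open d V /\ nonempty U /\ nonempty V.

Section Part2.
Hypothesis Hc : commutative f.
Hypothesis Hbeta : exists beta : set (set X), is_base d beta /\ forall B, beta B -> Delta (upper Psi B).
Hypothesis Hwm : weakly_mixing Delta (induced f).

Lemma upper_ne beta : is_base d beta -> forall U, is_open d U -> nonempty U ->
  exists B, beta B /\ (forall x, B x -> U x) /\ nonempty (upper Psi B).
Proof.
  intros [_ Hb] U HU [x Ux].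
  destruct (Hb U x HU Ux) as [B [HB [Bx BU]]].
  exists B. split; auto. split; auto.
  exists (singleton x). split.
  - apply HFin. exists (x :: nil). split; [discriminate|].
    intros y. unfold singleton. simpl. split; [intros ->; auto|intros [->|[]]; auto].
  - intros y Hy. unfold singleton in Hy. subst; auto.
Qed.

Lemma Xwm2 U1 V1 U2 V2 : gp U1 V1 -> gp U2 V2 ->
  exists n, (1 <= n)%nat /\ NN U1 V1 n /\ NN U2 V2 n.
Proof.
  destruct Hbeta as [beta [Hb HD]].
  intros [oU1 [oV1 [nU1 nV1]]] [oU2 [oV2 [nU2 nV2]]].
  destruct (upper_ne beta Hb U1 oU1 nU1) as [B1 [bB1 [sB1 nB1]]].
  destruct (upper_ne beta Hb V1 oV1 nV1) as [C1 [bC1 [sC1 nC1]]].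
  destruct (upper_ne beta Hb U2 oU2 nU2) as [B2 [bB2 [sB2 nB2]]].
  destruct (upper_ne beta Hb V2 oV2 nV2) as [C2 [bC2 [sC2 nC2]]].
  destruct (Hwm (fun i => match i with 0%nat => upper Psi B1 | _ => upper Psi B2 end)
                (fun i => match i with 0%nat => upper Psi C1 | _ => upper Psi C2 end))
    as [n [Hn Hall]].
  { intros i Hi. destruct i as [|i]; repeat split; auto. }
  assert (key : forall B C U V, (forall x, B x -> U x) -> (forall x, C x -> V x) ->
     (exists a, upper Psi B a /\ upper Psi C (induced f n a)) -> NN U V n).
  { intros B C U V BU CV [a [[Pa Ba] [_ Ca]]].
    destruct (HPsiK a Pa) as [[z az] _]. exists z. split; auto.
    apply CV, Ca. exists z; auto. }
  exists n. split; auto. split.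
  - apply (key B1 C1); auto. apply (Hall 0%nat). lia.
  - apply (key B2 C2); auto. apply (Hall 1%nat). lia.
Qed.

Lemma combine U1 V1 U2 V2 : gp U1 V1 -> gp U2 V2 ->
  exists U3 V3, gp U3 V3 /\ forall n, NN U3 V3 n -> NN U1 V1 n /\ NN U2 V2 n.
Proof.
  intros g1 g2.
  destruct g1 as [oU1 [oV1 [nU1 nV1]]]. destruct g2 as [oU2 [oV2 [nU2 nV2]]].
  destruct (Xwm2 U1 U2 V1 V2) as [m [Hm [[x [Ux Ux2]] [y [Vy Vy2]]]]].
  { repeat split; auto. } { repeat split; auto. }
  exists (fun z => U1 z /\ U2 (omega f m z)), (fun z => V1 z /\ V2 (omega f m z)).
  split.
  - repeat split.
    + apply open_inter; auto. apply omega_cont; auto.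
    + apply open_inter; auto. apply omega_cont; auto.
    + exists x; auto.
    + exists y; auto.
  - intros n [z [[Uz U2z] [Vz V2z]]]. split.
    + exists z; auto.
    + exists (omega f m z). split; auto. rewrite omega_comm; auto.
Qed.

Lemma Qk : forall k (U V : nat -> set X), (forall i, (i < S k)%nat -> gp (U i) (V i)) ->
  exists U' V', gp U' V' /\ forall n, NN U' V' n -> forall i, (i < S k)%nat -> NN (U i) (V i) n.
Proof.
  induction k; intros U V H.
  - exists (U 0%nat), (V 0%nat). split. apply H; lia.
    intros n Hn i Hi. assert (i = 0%nat) by lia. subst; auto.
  - destruct (IHk U V) as [U' [V' [g' H']]]. { intros; apply H; lia. }
    assert (gk : gp (U (S k)) (V (S k))) by (apply H; lia).
    destruct (combine U' V' (U (S k)) (V (S k)) g' gk) as [U3 [V3 [g3 H3]]].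
    exists U3, V3. split; auto. intros n Hn i Hi.
    destruct (H3 n Hn) as [N1 N2].
    destruct (Nat.eq_dec i (S k)) as [->|Hne]; auto.
    apply H'; auto. lia.
Qed.

Lemma part2 : wm_all_orders (is_open d) (omega f).
Proof.
  intros k U V H.
  destruct k as [|k].
  - exists 1%nat. split; auto. intros i Hi; lia.
  - destruct (Qk k U V) as [U' [V' [g' H']]].
    { intros i Hi. apply H; auto. }
    destruct (Xwm2 U' V' U' V' g' g') as [n [Hn [N1 _]]].
    exists n. split; auto. intros i Hi.
    destruct (H' n N1 i Hi) as [a Ha]. exists a; auto.
Qed.
End Part2.
End Main.

Theorem mainTheorem4 (X : Type) (d : X -> X -> R) (f : nat -> X -> X)
    (Psi : set (set X)) (Delta : set (set (set X)))
    (Hd : is_metric d) (Hcpt : compact_space d)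
    (Hf : forall n, continuous d (f n))
    (HPsiK : forall A, Psi A -> nonempty A /\ compact_set d A)
    (HFin : forall A, finite_nonempty A -> Psi A)
    (HInv : forall n A, Psi A -> Psi (induced f n A))
    (HType : hit_miss_type d Psi Delta)
    (HAdm : admissible d Psi Delta)
    (HCont : induced_continuous f Psi Delta) :
  (wm_all_orders (is_open d) (omega f) ->
     weakly_mixing Delta (induced f)) /\
  (commutative f ->
   (exists beta : set (set X), is_base d beta /\ forall B, beta B -> Delta (upper Psi B)) ->
   weakly_mixing Delta (induced f) ->
   wm_all_orders (is_open d) (omega f)).
Proof.
  split.
  - apply (part1 X d f Psi Delta Hd HPsiK HFin HInv HType).
  - intros Hc Hb Hw. apply (part2 X d f Psi Delta Hf HPsiK HFin Hc Hb Hw).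
Qed.
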